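(* For every $\alpha\in(0,1)\cup(1,\infty)$ and discrete memoryless channels $\mathcal W_1$ (from $\mathcal X_1$ to $\mathcal Y_1$) and $\mathcal W_2$ (from $\mathcal X_2$ to $\mathcal Y_2$), all alphabets finite, $U_\alpha(\mathcal W_1\times\mathcal W_2)=U_\alpha(\mathcal W_1)+U_\alpha(\mathcal W_2)$, where $(\mathcal W_1\times\mathcal W_2)(y_1,y_2|x_1,x_2)=\mathcal W_1(y_1|x_1)\mathcal W_2(y_2|x_2)$.
   Context: For $\alpha\in(0,1)\cup(1,\infty)$, $D_\alpha(P\|Q)=\frac1{\alpha-1}\log\sum_{x:P(x)>0}P(x)^\alpha Q(x)^{1-\alpha}$ ($+\infty$ if $\alpha>1$ and $P\not\ll Q$). For a channel $\mathcal W$, $U_\alpha(\mathcal W)=\max_{P_X}\min_{Q_Y}D_\alpha(P_X\times Q_Y\|P_{XY})$ with $P_{XY}(x,y)=P_X(x)\mathcal W(y|x)$. *)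

(* Defs.v *)
From HB Require Import structures.
From mathcomp Require Import all_boot all_order all_algebra.
From mathcomp Require Import all_classical all_reals all_analysis.
Set Implicit Arguments. Unset Strict Implicit. Unset Printing Implicit Defensive.
Import Order.TTheory GRing.Theory Num.Theory.
Local Open Scope ring_scope.
Local Open Scope classical_set_scope.

Definition isDist (R : realType) (T : finType) (P : T -> R) : Prop :=
  (forall t, 0 <= P t) /\ \sum_(t : T) P t = 1.

Definition isChannel (R : realType) (X Y : finType) (W : X -> Y -> R) : Prop :=
  forall x, isDist (W x).

(* Renyi divergence of order a (a <> 1), with the conventions:
   +oo if a > 1 and P is not absolutely continuous w.r.t. Q;
   +oo if the sum is 0 (log 0 = -oo, and 1/(a-1) < 0 for a < 1). *)
Definition renyiDiv (R : realType) (T : finType) (a : R) (P Q : T -> R) : \bar R :=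
  let s := \sum_(t : T | 0 < P t) P t `^ a * Q t `^ (1 - a) in
  if (1 < a) && ~~ [forall t, (Q t == 0) ==> (P t == 0)] then +oo%E
  else if s == 0 then +oo%E
  else ((a - 1)^-1 * ln s)%:E.

Definition prodDist (R : realType) (X Y : finType) (P : X -> R) (Q : Y -> R)
  : X * Y -> R := fun xy => P xy.1 * Q xy.2.
Definition jointDist (R : realType) (X Y : finType) (P : X -> R) (W : X -> Y -> R)
  : X * Y -> R := fun xy => P xy.1 * W xy.1 xy.2.

Definition U_alpha (R : realType) (X Y : finType) (a : R) (W : X -> Y -> R) : \bar R :=
  ereal_sup [set ereal_inf [set renyiDiv a (prodDist P Q) (jointDist P W)
                             | Q in @isDist R Y]
            | P in @isDist R X].

Definition prodChannel (R : realType) (X1 Y1 X2 Y2 : finType)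
  (W1 : X1 -> Y1 -> R) (W2 : X2 -> Y2 -> R) : X1 * X2 -> Y1 * Y2 -> R :=
  fun x y => W1 x.1 y.1 * W2 x.2 y.2.

(* Main.v *)
Require Import Defs.
From mathcomp Require Import all_boot all_order all_algebra.
From mathcomp Require Import all_classical all_reals all_analysis.
From mathcomp Require Import ring lra.
Import Order.TTheory GRing.Theory Num.Theory.
Set Implicit Arguments. Unset Strict Implicit. Unset Printing Implicit Defensive.
Local Open Scope ring_scope.

Section PowLemmas.
Variable R : realType.
Implicit Types x y l p : R.

Lemma powR_cvx p l x y : 1 <= p -> 0 <= l <= 1 -> 0 <= x -> 0 <= y ->
  (l * x + (1 - l) * y) `^ p <= l * x `^ p + (1 - l) * y `^ p.
Proof.
move=> p1 /andP[l0 l1] x0 y0.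
have := convex_powR p1 (Itv01 l0 l1) (x:=x) (y:=y).
rewrite !inE /= !in_itv /= !andbT => /(_ x0 y0).
rewrite !convRE /=; exact.
Qed.

Lemma powR_ccv p l x y : 0 < p <= 1 -> 0 <= l <= 1 -> 0 <= x -> 0 <= y ->
  l * x `^ p + (1 - l) * y `^ p <= (l * x + (1 - l) * y) `^ p.
Proof.
move=> /andP[p0 p1] /andP[l0 l1] x0 y0.
have ip1 : 1 <= p^-1 by rewrite invf_ge1.
have := @powR_cvx p^-1 l (x `^ p) (y `^ p) ip1 (introT andP (conj l0 l1)) (powR_ge0 x p) (powR_ge0 y p).
rewrite -!powRrM !mulfV ?gt_eqF // !powRr1 //.
have h1 : 0 <= l * x `^ p + (1 - l) * y `^ p.
  by rewrite addr_ge0 // mulr_ge0 ?powR_ge0 ?subr_ge0.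
move=> H.
have := ge0_ler_powR (ltW p0) _ _ H.
rewrite -powRrM mulVf ?gt_eqF // powRr1 //; apply.
- by rewrite nnegrE powR_ge0.
- by rewrite nnegrE addr_ge0 // mulr_ge0 ?subr_ge0.
Qed.
End PowLemmas.

Section Alt.
Variable R : realType.
Variable T : Type.
Variable mix : R -> T -> T -> T.

Definition cvx (C : T -> Prop) (f : T -> R) := forall l p q, 0 <= l <= 1 ->
  C p -> C q -> f (mix l p q) <= l * f p + (1 - l) * f q.
Definition cclosed (C : T -> Prop) := forall l p q, 0 <= l <= 1 ->
  C p -> C q -> C (mix l p q).

Lemma key_arith (ha hb fa fb : R) : ha < 0 -> 0 <= hb -> fb < 0 -> 0 <= fa ->
  fa * hb < fb * ha -> exists t, 0 <= t <= 1 /\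
    t * hb + (1 - t) * ha < 0 /\ t * fb + (1 - t) * fa < 0.
Proof.
move=> ha0 hb0 fb0 fa0 H.
have D0 : 0 < hb - ha by lra.
have E0 : 0 < fa - fb by lra.
set t1 := - ha / (hb - ha); set t2 := fa / (fa - fb).
have e1 : t1 * (hb - ha) = - ha by rewrite /t1 mulfVK // gt_eqF.
have e2 : t2 * (fa - fb) = fa by rewrite /t2 mulfVK // gt_eqF.
have t1p : 0 < t1 by rewrite /t1 divr_gt0 // oppr_gt0.
have t2p : 0 <= t2 by rewrite /t2 divr_ge0 // ltW.
have t11 : t1 <= 1 by rewrite /t1 ler_pdivrMr // mul1r; lra.
have t21 : t2 < 1 by rewrite /t2 ltr_pdivrMr // mul1r; lra.
have t12 : t2 < t1.
  have : 0 < (t1 - t2) * ((hb - ha) * (fa - fb)) by nra.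
  by rewrite pmulr_lgt0 ?mulr_gt0 // subr_gt0.
exists ((t1 + t2) / 2); split; first by apply/andP; split; lra.
split; nra.
Qed.

Lemma two_alt C h f : cclosed C -> cvx C h -> cvx C f ->
  (forall p, C p -> ~ (h p < 0 /\ f p < 0)) ->
  exists mu, 0 <= mu <= 1 /\ forall p, C p -> 0 <= mu * h p + (1 - mu) * f p.
Proof.
move=> cC ch cf nb.
have [[a [Ca ha]]|na] := boolp.pselect (exists a, C a /\ h a < 0); last first.
  exists 1; split; first by rewrite ler01 lexx.
  move=> p Cp; rewrite subrr mul0r addr0 mul1r leNgt; apply/negP => hp.
  by apply: na; exists p.
have [[b [Cb fb]]|nb'] := boolp.pselect (exists b, C b /\ f b < 0); last first.
  exists 0; split; first by rewrite lexx ler01.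
  move=> p Cp; rewrite subr0 mul0r add0r mul1r leNgt; apply/negP => fp.
  by apply: nb'; exists p.
have ge_f : forall p, C p -> h p < 0 -> 0 <= f p.
  by move=> p Cp hp; rewrite leNgt; apply/negP => fp; exact: (nb p Cp).
have ge_h : forall p, C p -> f p < 0 -> 0 <= h p.
  by move=> p Cp fp; rewrite leNgt; apply/negP => hp; exact: (nb p Cp).
have key : forall a b, C a -> C b -> h a < 0 -> f b < 0 ->
    f b * h a <= f a * h b.
  move=> a' b' Ca' Cb' ha' fb'; rewrite leNgt; apply/negP => H.
  have [t [t01 [H1 H2]]] := @key_arith (h a') (h b') (f a') (f b') ha' (ge_h _ Cb' fb') fb' (ge_f _ Ca' ha') H.
  apply: (nb (mix t b' a')); first exact: cC.
  split.
  - exact: (le_lt_trans (ch t b' a' t01 Cb' Ca') H1).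
  - exact: (le_lt_trans (cf t b' a' t01 Cb' Ca') H2).
have hpos : forall p, C p -> f p < 0 -> 0 < h p.
  move=> p Cp fp; have := key a p Ca Cp ha fp.
  have := ge_f a Ca ha; have := ge_h p Cp fp; nra.
pose S := [set r : R | exists p, C p /\ f p < 0 /\ r = - f p / h p]%classic.
have ubS : forall r, S r -> r <= f a / - h a.
  move=> r [p [Cp [fp ->]]].
  have hp := hpos p Cp fp.
  rewrite ler_pdivrMr // mulrAC ler_pdivlMr ?oppr_gt0 //.
  have := key a p Ca Cp ha fp; nra.
have S0 : S (- f b / h b) by exists b.
have hasS : has_sup S.
  by split; [exists (- f b / h b) | exists (f a / - h a) => r /ubS].
set r := sup S.
have rS : forall p, C p -> f p < 0 -> - f p / h p <= r.
  by move=> p Cp fp; apply: (ub_le_sup hasS.2); exists p.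
have rub : forall p, C p -> h p < 0 -> r <= f p / - h p.
  move=> p Cp hp; apply: ge_sup; first by exists (- f b / h b).
  move=> z [q [Cq [fq ->]]].
  have hq := hpos q Cq fq.
  rewrite ler_pdivrMr // mulrAC ler_pdivlMr ?oppr_gt0 //.
  have := key p q Cp Cq hp fq; nra.
have r0 : 0 <= r.
  apply: le_trans (rS b Cb fb).
  by rewrite divr_ge0 // ?oppr_ge0 ?ltW // hpos.
exists (r / (1 + r)); split.
  apply/andP; split; first by rewrite divr_ge0 // addr_ge0.
  by rewrite ler_pdivrMr ?mul1r; lra.
move=> p Cp.
have -> : r / (1 + r) * h p + (1 - r / (1 + r)) * f p = (r * h p + f p) / (1 + r).
  by field; lra.
apply: divr_ge0; last lra.
have [fp|fp] := ltP (f p) 0.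
  have hp := hpos p Cp fp; have := rS p Cp fp.
  rewrite ler_pdivrMr // => H; nra.
have [hp|hp] := ltP (h p) 0.
  have := rub p Cp hp; rewrite ler_pdivlMr ?oppr_gt0 // => H; nra.
nra.
Qed.

Lemma alt_n (n : nat) : forall (C : T -> Prop) (fs : nat -> T -> R), cclosed C ->
  (forall i, (i <= n)%N -> cvx C (fs i)) ->
  (forall p, C p -> ~ (forall i, (i <= n)%N -> fs i p < 0)) ->
  exists lam : nat -> R, (forall i, 0 <= lam i) /\ (\sum_(i < n.+1) lam i) = 1 /\
    forall p, C p -> 0 <= \sum_(i < n.+1) lam i * fs i p.
Proof.
elim: n => [|n IH] C fs cC cf nc.
  exists (fun i => (i == 0)%:R); split; first by move=> i; rewrite ler0n.
  split; first by rewrite big_ord1.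
  move=> p Cp; rewrite big_ord1 /= mul1r leNgt; apply/negP => H.
  by apply: (nc p Cp) => i; rewrite leqn0 => /eqP ->.
pose C' := fun p => C p /\ fs n.+1 p < 0.
have cC' : cclosed C'.
  move=> l p q l01 [Cp fp] [Cq fq]; split; first exact: cC.
  apply: le_lt_trans (cf n.+1 (leqnn _) l p q l01 Cp Cq) _.
  case/andP: l01 => l0 l1; nra.
have [lam' [lam0 [lam1 lamp]]] : exists lam : nat -> R, (forall i, 0 <= lam i) /\
    (\sum_(i < n.+1) lam i) = 1 /\
    forall p, C' p -> 0 <= \sum_(i < n.+1) lam i * fs i p.
  apply: IH => //.
  - move=> i ni l p q l01 [Cp _] [Cq _]; apply: cf => //; exact: leqW.
  - move=> p [Cp fp] H; apply: (nc p Cp) => i; rewrite leq_eqVlt => /orP[/eqP ->//|].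
    by rewrite ltnS; exact: H.
pose h := fun p => \sum_(i < n.+1) lam' i * fs i p.
have ch : cvx C h.
  move=> l p q l01 Cp Cq; rewrite /h !mulr_sumr -big_split /=.
  apply: ler_sum => i _.
  have := cf i (leqW (ltn_ord i)) l p q l01 Cp Cq.
  have := lam0 i; case/andP: l01 => l0 l1 => H0 H.
  have : lam' i * fs i (mix l p q) <= lam' i * (l * fs i p + (1 - l) * fs i q).
    exact: ler_wpM2l.
  move=> H2; apply: (le_trans H2); rewrite le_eqVlt; apply/orP; left; apply/eqP; ring.
have nb : forall p, C p -> ~ (h p < 0 /\ fs n.+1 p < 0).
  move=> p Cp [hp fp]; have := lamp p (conj Cp fp); rewrite -/(h p) leNgt hp //.
have [mu [mu01 Hmu]] := @two_alt C h (fs n.+1) cC ch (cf n.+1 (leqnn _)) nb.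
exists (fun i => if (i <= n)%N then mu * lam' i else if i == n.+1 then 1 - mu else 0).
case/andP: mu01 => mu0 mu1.
split.
  move=> i; case: ifP => _; first by rewrite mulr_ge0.
  by case: ifP => _; lra.
split.
  rewrite big_ord_recr /= ltnn eqxx.
  under eq_bigr => i _ do rewrite /= -ltnS (ltn_ord i).
  by rewrite -mulr_sumr lam1; lra.
move=> p Cp; rewrite big_ord_recr /= ltnn eqxx.
under eq_bigr => i _ do rewrite /= -ltnS (ltn_ord i) -mulrA.
by rewrite -mulr_sumr; apply: Hmu.
Qed.
End Alt.

Lemma sum_pair (R : realType) (I J : finType) (F : I * J -> R) :
  \sum_(p : I * J) F p = \sum_i \sum_j F (i, j).
Proof. by rewrite pair_bigA; apply: eq_bigr => -[]. Qed.

Lemma sum_pos_ex (R : realType) (I : finType) (F : I -> R) :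
  (forall i, 0 <= F i) -> 0 < \sum_i F i -> exists i, 0 < F i.
Proof.
move=> F0 S0; apply: boolp.contrapT => nH.
have : \sum_i F i <= 0.
  apply: sumr_le0 => i _; rewrite leNgt; apply/negP => Fi; apply: nH; by exists i.
by rewrite leNgt S0.
Qed.

Lemma dist_ex (R : realType) (I : finType) (P : I -> R) :
  isDist P -> exists i, 0 < P i.
Proof. by case=> P0 P1; apply: sum_pos_ex => //; rewrite P1. Qed.

Lemma dist_le1 (R : realType) (I : finType) (P : I -> R) i :
  isDist P -> P i <= 1.
Proof.
case=> P0 <-; rewrite (bigD1 i) //= lerDl; exact: sumr_ge0.
Qed.

Section Chan.
Variable R : realType.
Variables (X Y : finType) (W : X -> Y -> R) (a : R).

Definition gx x (Q : Y -> R) := \sum_y Q y `^ a * W x y `^ (1 - a).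
Definition GG (P : X -> R) Q := \sum_x P x * gx x Q.
Definition viol (P : X -> R) (Q : Y -> R) : bool :=
  [exists x, [exists y, (0 < P x) && (0 < Q y) && (W x y == 0)]].
Definition FF P Q := renyiDiv a (prodDist P Q) (jointDist P W).

Lemma gx_ge0 x Q : 0 <= gx x Q.
Proof. by apply: sumr_ge0 => y _; rewrite mulr_ge0 ?powR_ge0. Qed.

Lemma GG_ge0 P Q : (forall x, 0 <= P x) -> 0 <= GG P Q.
Proof. by move=> P0; apply: sumr_ge0 => x _; rewrite mulr_ge0 ?gx_ge0. Qed.

Lemma FF_eq P Q : a != 0 -> (forall x y, 0 <= W x y) ->
  (forall x, 0 <= P x) -> (forall y, 0 <= Q y) ->
  FF P Q = if (1 < a) && viol P Q then +oo%E
           else if GG P Q == 0 then +oo%E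
           else ((a - 1)^-1 * ln (GG P Q))%:E.
Proof.
move=> an0 Wn P0 Q0; rewrite /FF /renyiDiv /=.
have -> : [forall t, (jointDist P W t == 0) ==> (prodDist P Q t == 0)] = ~~ viol P Q.
  apply/idP/idP.
  - move/forallP => H; apply/existsP => -[x /existsP [y /andP[/andP[Px Qy] /eqP W0]]].
    have := H (x, y); rewrite /jointDist /prodDist /= W0 mulr0 eqxx /= mulf_eq0.
    by rewrite !gt_eqF.
  - move=> nv; apply/forallP => -[x y] /=; apply/implyP.
    rewrite /jointDist /prodDist /= mulf_eq0 => /orP[/eqP->|/eqP Wxy]; first by rewrite mul0r.
    case: (eqVneq (P x * Q y) 0) => // PQ; exfalso; move/negP: nv; apply.
    move: PQ; rewrite mulf_eq0 negb_or => /andP[Px Qy].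
    apply/existsP; exists x; apply/existsP; exists y.
    by rewrite !lt0r Px Qy P0 Q0 Wxy eqxx.
have -> : \sum_(t | 0 < prodDist P Q t) prodDist P Q t `^ a * jointDist P W t `^ (1 - a)
    = GG P Q.
  rewrite big_mkcond /= sum_pair /GG; apply: eq_bigr => x _.
  rewrite /gx mulr_sumr; apply: eq_bigr => y _; rewrite /prodDist /jointDist /=.
  case: ifPn => PQ.
    have Px : 0 < P x.
      by rewrite lt0r P0 andbT; apply/eqP => Px0; move: PQ; rewrite Px0 mul0r ltxx.
    rewrite powRM ?P0 ?Q0 // powRM ?P0 ?Wn //.
    rewrite mulrACA -powRD; last by rewrite (gt_eqF Px) implybT.
    by rewrite addrC subrK powRr1 ?P0 // mulrA.
  have : P x * Q y = 0.
    by have := mulr_ge0 (P0 x) (Q0 y); rewrite le_eqVlt (negbTE PQ) orbF => /eqP <-.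
  move/eqP; rewrite mulf_eq0 => /orP[/eqP->|/eqP->]; first by rewrite mul0r.
  by rewrite powR0 // !mul0r mulr0.
by rewrite negbK.
Qed.
End Chan.

Lemma sum_enum (R : realType) (I : finType) (x0 : I) (G : nat -> I -> R) :
  \sum_(i < #|I|) G i (nth x0 (enum I) i) = \sum_x G (index x (enum I)) x.
Proof.
rewrite [RHS](_ : _ = \sum_(x <- enum I) G (index x (enum I)) x); last by rewrite big_enum.
rewrite [RHS](big_nth x0) -cardE big_mkord.
apply: eq_bigr => i _; rewrite index_uniq // ?enum_uniq //.
by rewrite -cardE.
Qed.

Lemma le_sum1 (R : realType) (I : finType) (F : I -> R) j :
  (forall i, 0 <= F i) -> F j <= \sum_i F i.
Proof. by move=> F0; rewrite (bigD1 j) //= lerDl; apply: sumr_ge0. Qed.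

Lemma cln_le (R : realType) (c u v : R) : 0 < u -> u <= v ->
  (c <= 0 -> c * ln v <= c * ln u) /\ (0 <= c -> c * ln u <= c * ln v).
Proof.
move=> u0 uv; have v0 : 0 < v by apply: lt_le_trans uv.
have := uv; rewrite -ler_ln ?posrE // => H; split => c0; nra.
Qed.

Section Chan2.
Variable R : realType.
Variables (X Y : finType) (W : X -> Y -> R) (a : R).

Lemma GG_pos P Q : (forall x y, 0 <= W x y) -> isDist P -> isDist Q ->
  ~~ viol W P Q -> 0 < GG W a P Q.
Proof.
move=> Wn dP dQ nv.
have [x Px] := dist_ex dP; have [y Qy] := dist_ex dQ.
have Wxy : 0 < W x y.
  rewrite lt0r Wn andbT; apply: contra nv => /eqP W0.
  by apply/existsP; exists x; apply/existsP; exists y; rewrite Px Qy W0 eqxx.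
apply: (lt_le_trans _ (le_sum1 x _)); last first.
  by move=> x'; rewrite mulr_ge0 ?(dP.1 x') ?gx_ge0.
apply: mulr_gt0 => //; apply: (lt_le_trans _ (le_sum1 y _)).
  by rewrite mulr_gt0 ?powR_gt0.
by move=> y'; rewrite mulr_ge0 ?powR_ge0.
Qed.

Lemma powR_le1 (x r : R) : 0 <= x <= 1 -> 0 <= r -> x `^ r <= 1.
Proof.
move=> /andP[x0 x1] r0.
have := ge0_ler_powR r0 (x:=x) (y:=1); rewrite powR1 /=; apply => //.
by rewrite nnegrE.
Qed.

Lemma powR_ge1 (x r : R) : 0 < x <= 1 -> r <= 0 -> 1 <= x `^ r.
Proof.
move=> /andP[x0 x1] r0.
have h1 : x `^ r * x `^ (- r) = 1.
  rewrite -powRD; last by rewrite (gt_eqF x0) implybT.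
  by rewrite subrr powRr0.
have h2 : x `^ (- r) <= 1.
  by apply: powR_le1; [rewrite (ltW x0) x1 | rewrite oppr_ge0].
have h3 : 0 < x `^ (- r) by apply: powR_gt0.
have h4 : 0 < x `^ r by apply: powR_gt0.
nra.
Qed.

Lemma FF_lb : 0 < a -> a != 1 -> isChannel W ->
  exists L : R, forall P Q, isDist P -> isDist Q -> (L%:E <= FF W a P Q)%E.
Proof.
move=> a0 a1 Wch.
have an0 : a != 0 by rewrite gt_eqF.
have Wn : forall x y, 0 <= W x y by move=> x y; exact: (Wch x).1.
have W1 : forall x y, W x y <= 1 by move=> x y; exact: dist_le1.
have [alt1|agt1] := ltP a 1.
- exists ((a - 1)^-1 * ln (#|Y|%:R)) => P Q dP dQ.
  rewrite (FF_eq an0 Wn dP.1 dQ.1).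
  rewrite ltNge (ltW alt1) /=; case: ifPn => [_|G0]; first exact: leey.
  rewrite lee_fin.
  have Gp : 0 < GG W a P Q by rewrite lt0r G0 /=; apply: GG_ge0; exact: dP.1.
  have gY : forall x, gx W a x Q <= #|Y|%:R.
    move=> x; rewrite -sumr_const; apply: ler_sum => y _.
    rewrite -[X in _ <= X]mulr1; apply: ler_pM; rewrite ?powR_ge0 //.
      by apply: powR_le1; [rewrite (dQ.1 y) (dist_le1 y dQ) | rewrite ltW].
    by apply: powR_le1; [rewrite Wn W1 | rewrite subr_ge0 ltW].
  have GY : GG W a P Q <= #|Y|%:R.
    apply: (@le_trans _ _ (\sum_x P x * #|Y|%:R)).
      by apply: ler_sum => x _; apply: ler_wpM2l; [exact: dP.1 | exact: gY].
    by rewrite -mulr_suml dP.2 mul1r.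
  by apply: (cln_le _ Gp GY).1; rewrite invr_le0 subr_le0 ltW.
- have agt1' : 1 < a by rewrite lt_neqAle eq_sym a1 agt1.
  exists ((a - 1)^-1 * ln ((#|Y|%:R)^-1 `^ a)) => P Q dP dQ.
  rewrite (FF_eq an0 Wn dP.1 dQ.1) agt1' /=.
  case: ifPn => [_|nv]; first exact: leey.
  have Gp := GG_pos Wn dP dQ nv.
  rewrite (gt_eqF Gp) lee_fin.
  have [y0 Qy0] := dist_ex dQ.
  set ys := [arg max_(y > y0) Q y]%O.
  have Qmax : forall y, Q y <= Q ys.
    by move=> y; rewrite /ys; case: (arg_maxP Q (erefl true : xpredT y0)) => i _; apply.
  have Qys : 0 < Q ys by apply: lt_le_trans Qy0 (Qmax y0).
  have Y1 : 1 <= #|Y|%:R * Q ys.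
    have : \sum_y Q y <= \sum_(y : Y) Q ys by apply: ler_sum => y _; exact: Qmax.
    by rewrite dQ.2 sumr_const mulr_natl.
  have Yp : 0 < (#|Y|%:R : R).
    by rewrite ltr0n; apply/card_gt0P; exists y0.
  have kQ : (#|Y|%:R)^-1 `^ a <= Q ys `^ a.
    apply: ge0_ler_powR; rewrite ?nnegrE ?invr_ge0 ?(ltW a0) ?(ltW Qys) ?(ltW Yp) //.
    by rewrite -(ler_pM2l Yp) mulfV ?gt_eqF.
  have kp : 0 < (#|Y|%:R : R)^-1 `^ a by apply: powR_gt0; rewrite invr_gt0.
  suff kG : (#|Y|%:R)^-1 `^ a <= GG W a P Q.
    by apply: (cln_le _ kp kG).2; rewrite invr_ge0 subr_ge0 ltW.
  apply: (@le_trans _ _ (\sum_x P x * (#|Y|%:R)^-1 `^ a)).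
    by rewrite -mulr_suml dP.2 mul1r.
  apply: ler_sum => x _.
  have [Px0|Pxp] := eqVneq (P x) 0; first by rewrite Px0 !mul0r.
  have Pxp' : 0 < P x by rewrite lt0r Pxp dP.1.
  apply: ler_wpM2l; first exact: dP.1.
  have Wxy : 0 < W x ys.
    rewrite lt0r Wn andbT; apply: contra nv => /eqP W0.
    by apply/existsP; exists x; apply/existsP; exists ys; rewrite Pxp' Qys W0 eqxx.
  apply: (le_trans kQ); apply: (le_trans _ (le_sum1 ys _)); last first.
    by move=> y; rewrite mulr_ge0 ?powR_ge0.
  rewrite -[X in X <= _]mulr1; apply: ler_wpM2l; first exact: powR_ge0.
  by apply: powR_ge1; [rewrite Wxy W1 | rewrite subr_le0 ltW].
Qed.
End Chan2.

Section Minimax.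
Variable R : realType.
Variables (X Y : finType) (W : X -> Y -> R) (a : R).

Definition mixQ (l : R) (p q : Y -> R) := fun y => l * p y + (1 - l) * q y.

Lemma U_ge P w : isDist P -> (forall Q, isDist Q -> (w <= FF W a P Q)%E) ->
  (w <= U_alpha a W)%E.
Proof.
move=> dP H; apply: (@le_trans _ _ (ereal_inf [set FF W a P Q | Q in @isDist R Y])).
  by apply/ereal_infP => _ [Q dQ <-]; exact: H.
by apply: ereal_sup_ubound; exists P.
Qed.

Lemma dist_closed : cclosed mixQ (@isDist R Y).
Proof.
move=> l p q /andP[l0 l1] [p0 p1] [q0 q1]; split.
  by move=> y; rewrite /mixQ addr_ge0 // mulr_ge0 ?p0 ?q0 ?subr_ge0.
by rewrite /mixQ big_split /= -!mulr_sumr p1 q1 !mulr1 addrC subrK.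
Qed.

Lemma gx_ccv x l p q : 0 < a <= 1 -> 0 <= l <= 1 -> isDist p -> isDist q ->
  l * gx W a x p + (1 - l) * gx W a x q <= gx W a x (mixQ l p q).
Proof.
move=> a01 l01 [p0 _] [q0 _]; rewrite /gx !mulr_sumr -big_split /=.
apply: ler_sum => y _; rewrite /mixQ !mulrA -mulrDl.
apply: ler_wpM2r; first exact: powR_ge0.
exact: powR_ccv.
Qed.

Lemma gx_cvx x l p q : 1 <= a -> 0 <= l <= 1 -> isDist p -> isDist q ->
  gx W a x (mixQ l p q) <= l * gx W a x p + (1 - l) * gx W a x q.
Proof.
move=> a1 l01 [p0 _] [q0 _]; rewrite /gx !mulr_sumr -big_split /=.
apply: ler_sum => y _; rewrite /mixQ !mulrA -mulrDl.
apply: ler_wpM2r; first exact: powR_ge0.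
exact: powR_cvx.
Qed.

Lemma lam_dist (x0 : X) n (lam : nat -> R) :
  #|X| = n.+1 -> (forall i, 0 <= lam i) -> \sum_(i < n.+1) lam i = 1 ->
  isDist (fun x => lam (index x (enum X))).
Proof.
move=> cX l0 l1; split => // .
have := sum_enum x0 (fun i (_ : X) => lam i); rewrite /= => <-.
by move: l1; rewrite -cX.
Qed.

Lemma lam_sum (x0 : X) n (lam : nat -> R) (F : X -> R) :
  #|X| = n.+1 ->
  \sum_(i < n.+1) lam i * F (nth x0 (enum X) i) =
  \sum_x lam (index x (enum X)) * F x.
Proof.
move=> cX; have := sum_enum x0 (fun i x => lam i * F x); rewrite /= => <-.
by rewrite cX.
Qed.

Lemma idx_ok (x0 x : X) n : #|X| = n.+1 ->
  (index x (enum X) <= n)%N /\ nth x0 (enum X) (index x (enum X)) = x.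
Proof.
move=> cX; split; last by rewrite nth_index // mem_enum.
by rewrite -ltnS -cX cardE index_mem mem_enum.
Qed.

Lemma minimax_lt1 w : 0 < a -> a < 1 -> isChannel W -> (0 < #|X|)%N ->
  (U_alpha a W < w%:E)%E ->
  exists Q, isDist Q /\ forall x, expR (w * (a - 1)) <= gx W a x Q.
Proof.
move=> a0 a1 Wch X0 Uw.
have Wn : forall x y, 0 <= W x y by move=> x y; exact: (Wch x).1.
have an0 : a != 0 by rewrite gt_eqF.
set t := expR (w * (a - 1)).
apply: boolp.contrapT => nex.
have H : forall Q, isDist Q -> exists x, gx W a x Q < t.
  move=> Q dQ; apply: boolp.contrapT => nx; apply: nex; exists Q; split => // x.
  by rewrite leNgt; apply/negP => h; apply: nx; exists x.
have [x0 _] := card_gt0P X0.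
have cX : #|X| = (#|X|.-1).+1 by rewrite prednK.
set n := #|X|.-1 in cX.
have [lam [lam0 [lam1 lamp]]] := @alt_n R (Y -> R) mixQ n (@isDist R Y)
   (fun i Q => t - gx W a (nth x0 (enum X) i) Q) dist_closed
   (fun i _ l p q l01 dp dq => ltac:(have := gx_ccv (nth x0 (enum X) i) (introT andP (conj a0 (ltW a1))) l01 dp dq; lra))
   (fun Q dQ Hall => ltac:(have [x hx] := H Q dQ; have [i1 i2] := idx_ok x0 x cX;
        have := Hall _ i1; rewrite i2; lra)).
pose P x := lam (index x (enum X)).
have dP : isDist P := lam_dist x0 cX lam0 lam1.
have GP : forall Q, isDist Q -> GG W a P Q <= t.
  move=> Q dQ; have := lamp Q dQ; rewrite (lam_sum x0 lam (fun x => t - gx W a x Q) cX).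
  rewrite (eq_bigr (fun x => P x * t - P x * gx W a x Q)); last by move=> x _; rewrite mulrBr.
  by rewrite sumrB -mulr_suml dP.2 mul1r subr_ge0.
have : (w%:E <= U_alpha a W)%E.
  apply: (U_ge dP) => Q dQ.
  rewrite (FF_eq an0 Wn dP.1 dQ.1) ltNge (ltW a1) /=.
  case: ifPn => [_|G0]; first exact: leey.
  have Gp : 0 < GG W a P Q by rewrite lt0r G0 /=; apply: GG_ge0; exact: dP.1.
  rewrite lee_fin.
  have := (cln_le ((a - 1)^-1) Gp (GP Q dQ)).1; rewrite /t expRK mulrCA mulVf ?mulr1.
    by apply; rewrite invr_le0 subr_le0 ltW.
  by rewrite subr_eq0 lt_eqF.
by rewrite leNgt Uw.
Qed.
Lemma minimax_gt1 w : 1 < a -> isChannel W -> (0 < #|X|)%N ->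
  (U_alpha a W < w%:E)%E ->
  exists Q, isDist Q /\ forall x, (forall y, 0 < Q y -> W x y != 0) /\
    gx W a x Q <= expR (w * (a - 1)).
Proof.
move=> a1 Wch X0 Uw.
have a0 : 0 < a by apply: lt_trans a1.
have Wn : forall x y, 0 <= W x y by move=> x y; exact: (Wch x).1.
have an0 : a != 0 by rewrite gt_eqF.
have [w' [Uw' w'w]] : exists w', (U_alpha a W < w'%:E)%E /\ w' < w.
  move: Uw; case: (U_alpha a W) => [u| |] /= H.
  - exists ((u + w) / 2); move: H; rewrite !lte_fin => H; split; lra.
  - by move: H; rewrite ltNge leey.
  - by exists (w - 1); split; [exact: ltNyr | lra].
set t := expR (w * (a - 1)); set t' := expR (w' * (a - 1)).
have tp : 0 < t by apply: expR_gt0.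
have t'p : 0 < t' by apply: expR_gt0.
have tt' : t' < t by rewrite ltr_expR ltr_pM2r ?subr_gt0.
apply: boolp.contrapT => nex.
pose C0 := fun Q : Y -> R => isDist Q /\ (forall y x, W x y = 0 -> Q y = 0).
have H : forall Q, C0 Q -> exists x, t < gx W a x Q.
  move=> Q [dQ HQ]; apply: boolp.contrapT => nx; apply: nex; exists Q; split => // x.
  split.
    move=> y Qy; apply/eqP => Wxy; move: Qy; rewrite (HQ y x Wxy) ltxx //.
  by rewrite leNgt; apply/negP => h; apply: nx; exists x.
have cC0 : cclosed mixQ C0.
  move=> l p q l01 [dp hp] [dq hq]; split; first exact: dist_closed.
  by move=> y x Wxy; rewrite /mixQ (hp y x Wxy) (hq y x Wxy) !mulr0 addr0.
have [x0 _] := card_gt0P X0.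
have cX : #|X| = (#|X|.-1).+1 by rewrite prednK.
set n := #|X|.-1 in cX.
have [lam [lam0 [lam1 lamp]]] := @alt_n R (Y -> R) mixQ n C0
   (fun i Q => gx W a (nth x0 (enum X) i) Q - t) cC0
   (fun i _ l p q l01 dp dq => ltac:(have := gx_cvx (nth x0 (enum X) i) (ltW a1) l01 dp.1 dq.1; lra))
   (fun Q dQ Hall => ltac:(have [x hx] := H Q dQ; have [i1 i2] := idx_ok x0 x cX;
        have := Hall _ i1; rewrite i2; lra)).
pose lm x := lam (index x (enum X)).
have dl : isDist lm := lam_dist x0 cX lam0 lam1.
have Gl : forall Q, C0 Q -> t <= GG W a lm Q.
  move=> Q dQ; have := lamp Q dQ; rewrite (lam_sum x0 lam (fun x => gx W a x Q - t) cX).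
  rewrite (eq_bigr (fun x => lm x * gx W a x Q - lm x * t)); last by move=> x _; rewrite mulrBr.
  by rewrite sumrB -mulr_suml dl.2 mul1r subr_ge0.
set r := t' / t.
have r0 : 0 < r by rewrite divr_gt0.
have r1 : r < 1 by rewrite ltr_pdivrMr // mul1r.
have Xp : 0 < (#|X|%:R : R) by rewrite ltr0n.
set k := (1 - r) / #|X|%:R.
have kp : 0 < k by rewrite divr_gt0 // subr_gt0.
pose P x := r * lm x + k.
have dP : isDist P.
  split; first by move=> x; rewrite /P addr_ge0 ?(ltW kp) // mulr_ge0 ?(ltW r0) // (dl.1 x).
  rewrite /P big_split /= -mulr_sumr dl.2 mulr1 sumr_const.
  rewrite (_ : k *+ _ = 1 - r); first by rewrite addrC subrK.
  by rewrite /k -mulr_natr -mulrA mulVf ?gt_eqF // mulr1.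
have : (w'%:E <= U_alpha a W)%E.
  apply: (U_ge dP) => Q dQ.
  rewrite (FF_eq an0 Wn dP.1 dQ.1) a1 /=.
  case: ifPn => [_|nv]; first exact: leey.
  have CQ : C0 Q.
    split => // y x Wxy; apply/eqP; apply: contraNT nv => Qy.
    apply/existsP; exists x; apply/existsP; exists y.
    have Qy' : 0 < Q y by rewrite lt0r Qy (dQ.1 y).
    rewrite Wxy eqxx andbT Qy' andbT /P ltr_pwDr //.
    by rewrite mulr_ge0 ?(ltW r0) // (dl.1 x).
  have GP : t' <= GG W a P Q.
    apply: (@le_trans _ _ (r * GG W a lm Q)).
      have tn0 : t != 0 by rewrite gt_eqF.
      rewrite -{1}(divfK tn0 t') -/r.
      by apply: ler_wpM2l; [exact: ltW | exact: Gl].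
    rewrite /GG mulr_sumr; apply: ler_sum => x _; rewrite /P mulrDl mulrA lerDl.
    by rewrite mulr_ge0 ?(ltW kp) ?gx_ge0.
  have Gp : 0 < GG W a P Q by apply: lt_le_trans GP.
  rewrite (gt_eqF Gp) lee_fin.
  have := (cln_le ((a - 1)^-1) t'p GP).2; rewrite /t' expRK mulrCA mulVf ?mulr1.
    by apply; rewrite invr_ge0 subr_ge0 ltW.
  by rewrite subr_eq0 gt_eqF.
by rewrite leNgt Uw'.
Qed.
End Minimax.

Lemma dist_prod (R : realType) (I J : finType) (P : I -> R) (Q : J -> R) :
  isDist P -> isDist Q -> isDist (prodDist P Q).
Proof.
move=> [P0 P1] [Q0 Q1]; split; first by move=> [i j]; rewrite /prodDist mulr_ge0.
rewrite sum_pair /prodDist /=.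
under eq_bigr => i _ do rewrite -mulr_sumr Q1 mulr1.
exact: P1.
Qed.

Section Prod.
Variable R : realType.
Variables (X1 Y1 X2 Y2 : finType) (W1 : X1 -> Y1 -> R) (W2 : X2 -> Y2 -> R) (a : R).
Hypothesis W1n : forall x y, 0 <= W1 x y.
Hypothesis W2n : forall x y, 0 <= W2 x y.

Let W12 := prodChannel W1 W2.
Lemma W12n : forall x y, 0 <= W12 x y.
Proof. by move=> x y; rewrite /W12 /prodChannel mulr_ge0. Qed.

Lemma gx_prod x (Q1 : Y1 -> R) (Q2 : Y2 -> R) :
  (forall y, 0 <= Q1 y) -> (forall y, 0 <= Q2 y) ->
  gx W12 a x (prodDist Q1 Q2) = gx W1 a x.1 Q1 * gx W2 a x.2 Q2.
Proof.
move=> Q10 Q20; rewrite /gx sum_pair big_distrlr /=; apply: eq_bigr => y1 _.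
apply: eq_bigr => y2 _; rewrite /prodDist /W12 /prodChannel /=.
by rewrite !powRM // mulrACA.
Qed.

Lemma upper_lt1 w1 w2 (Q1 : Y1 -> R) (Q2 : Y2 -> R) (P : X1 * X2 -> R) :
  0 < a -> a < 1 -> isDist Q1 -> isDist Q2 -> isDist P ->
  (forall x, expR (w1 * (a - 1)) <= gx W1 a x Q1) ->
  (forall x, expR (w2 * (a - 1)) <= gx W2 a x Q2) ->
  (FF W12 a P (prodDist Q1 Q2) <= (w1 + w2)%:E)%E.
Proof.
move=> a0 a1 dQ1 dQ2 dP H1 H2.
have an0 : a != 0 by rewrite gt_eqF.
have dQ := dist_prod dQ1 dQ2.
rewrite (FF_eq an0 W12n dP.1 dQ.1) ltNge (ltW a1) /=.
set t1 := expR (w1 * (a - 1)); set t2 := expR (w2 * (a - 1)).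
have t1p : 0 < t1 by apply: expR_gt0.
have t2p : 0 < t2 by apply: expR_gt0.
have Gt : t1 * t2 <= GG W12 a P (prodDist Q1 Q2).
  apply: (@le_trans _ _ (\sum_x P x * (t1 * t2))).
    by rewrite -mulr_suml dP.2 mul1r.
  apply: ler_sum => x _; apply: ler_wpM2l; first exact: dP.1.
  rewrite gx_prod; last by move=> y; exact: dQ2.1.
    by apply: ler_pM; [exact: ltW | exact: ltW | exact: H1 | exact: H2].
  by move=> y; exact: dQ1.1.
have tp : 0 < t1 * t2 by rewrite mulr_gt0.
have Gp : 0 < GG W12 a P (prodDist Q1 Q2) by apply: lt_le_trans Gt.
rewrite (gt_eqF Gp) lee_fin.
have := (cln_le ((a - 1)^-1) tp Gt).1.
have e : (a - 1)^-1 * (w1 * (a - 1) + w2 * (a - 1)) = w1 + w2.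
  by field; rewrite subr_eq0 lt_eqF.
rewrite /t1 /t2 -expRD expRK e.
by apply; rewrite invr_le0 subr_le0 ltW.
Qed.

Lemma upper_gt1 w1 w2 (Q1 : Y1 -> R) (Q2 : Y2 -> R) (P : X1 * X2 -> R) :
  1 < a -> isDist Q1 -> isDist Q2 -> isDist P ->
  (forall x, (forall y, 0 < Q1 y -> W1 x y != 0) /\ gx W1 a x Q1 <= expR (w1 * (a - 1))) ->
  (forall x, (forall y, 0 < Q2 y -> W2 x y != 0) /\ gx W2 a x Q2 <= expR (w2 * (a - 1))) ->
  (FF W12 a P (prodDist Q1 Q2) <= (w1 + w2)%:E)%E.
Proof.
move=> a1 dQ1 dQ2 dP H1 H2.
have a0 : 0 < a by apply: lt_trans a1.
have an0 : a != 0 by rewrite gt_eqF.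
have dQ := dist_prod dQ1 dQ2.
have nv : ~~ viol W12 P (prodDist Q1 Q2).
  apply/negP => /existsP [x /existsP [y /andP [/andP [Px Qy] /eqP Wxy]]].
  move: Qy; rewrite /prodDist => Qy.
  have Q1y : 0 < Q1 y.1.
    rewrite lt0r (dQ1.1 y.1) andbT; apply/eqP => hh; by move: Qy; rewrite hh mul0r ltxx.
  have Q2y : 0 < Q2 y.2.
    rewrite lt0r (dQ2.1 y.2) andbT; apply/eqP => hh; by move: Qy; rewrite hh mulr0 ltxx.
  move: Wxy; rewrite /W12 /prodChannel => /eqP; rewrite mulf_eq0 => /orP[] /eqP.
    by apply/eqP; exact: (H1 x.1).1.
  by apply/eqP; exact: (H2 x.2).1.
rewrite (FF_eq an0 W12n dP.1 dQ.1) a1 (negbTE nv) /=.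
have Gp : 0 < GG W12 a P (prodDist Q1 Q2) := GG_pos a W12n dP dQ nv.
rewrite (gt_eqF Gp) lee_fin.
set t1 := expR (w1 * (a - 1)); set t2 := expR (w2 * (a - 1)).
have Gt : GG W12 a P (prodDist Q1 Q2) <= t1 * t2.
  apply: (@le_trans _ _ (\sum_x P x * (t1 * t2))); last first.
    by rewrite -mulr_suml dP.2 mul1r.
  apply: ler_sum => x _; apply: ler_wpM2l; first exact: dP.1.
  rewrite gx_prod; last by move=> y; exact: dQ2.1.
    by apply: ler_pM; rewrite ?gx_ge0 //; [exact: (H1 x.1).2 | exact: (H2 x.2).2].
  by move=> y; exact: dQ1.1.
have := (cln_le ((a - 1)^-1) Gp Gt).2.
have e : (a - 1)^-1 * (w1 * (a - 1) + w2 * (a - 1)) = w1 + w2.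
  by field; rewrite subr_eq0 gt_eqF.
rewrite /t1 /t2 -expRD expRK e.
by apply; rewrite invr_ge0 subr_ge0 ltW.
Qed.
End Prod.

Section Lower.
Variable R : realType.
Variables (X1 Y1 X2 Y2 : finType) (W1 : X1 -> Y1 -> R) (W2 : X2 -> Y2 -> R) (a : R).
Hypothesis W1n : forall x y, 0 <= W1 x y.
Hypothesis W2n : forall x y, 0 <= W2 x y.
Variables (P1 : X1 -> R) (P2 : X2 -> R) (Q12 : Y1 * Y2 -> R).
Hypothesis a0 : 0 < a.
Hypothesis dP1 : isDist P1.
Hypothesis dP2 : isDist P2.
Hypothesis dQ : isDist Q12.

Definition qm y1 := \sum_y2 Q12 (y1, y2).
Definition cond y1 y2 := Q12 (y1, y2) / qm y1.

Lemma qm_ge0 y1 : 0 <= qm y1.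
Proof. by apply: sumr_ge0 => y2 _; exact: dQ.1. Qed.

Lemma dqm : isDist qm.
Proof. by split; [exact: qm_ge0 | rewrite /qm -(sum_pair Q12) dQ.2]. Qed.

Lemma dcond y1 : 0 < qm y1 -> isDist (cond y1).
Proof.
move=> qp; split; first by move=> y2; rewrite /cond divr_ge0 ?qm_ge0 ?dQ.1.
by rewrite /cond -mulr_suml -/(qm y1) mulfV ?gt_eqF.
Qed.

Lemma key y1 x2 : \sum_y2 Q12 (y1, y2) `^ a * W2 x2 y2 `^ (1 - a)
  = qm y1 `^ a * gx W2 a x2 (cond y1).
Proof.
have an0 : a != 0 by rewrite gt_eqF.
have [q0|qn0] := eqVneq (qm y1) 0.
  have Q0 : forall y2, Q12 (y1, y2) = 0.
    by move=> y2; apply: (psumr_eq0P _ q0) => // y _; exact: dQ.1.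
  rewrite q0 powR0 // mul0r; apply: big1 => y2 _; by rewrite Q0 powR0 // mul0r.
have qp : 0 < qm y1 by rewrite lt0r qn0 qm_ge0.
rewrite /gx mulr_sumr; apply: eq_bigr => y2 _.
have -> : Q12 (y1, y2) = qm y1 * cond y1 y2 by rewrite /cond mulrC divfK.
by rewrite powRM ?qm_ge0 ?mulrA // /cond divr_ge0 ?qm_ge0 ?dQ.1.
Qed.

Definition Am y1 := qm y1 `^ a * \sum_x1 P1 x1 * W1 x1 y1 `^ (1 - a).
Definition Dm y1 := GG W2 a P2 (cond y1).

Lemma Am_ge0 y1 : 0 <= Am y1.
Proof.
rewrite /Am mulr_ge0 ?powR_ge0 //; apply: sumr_ge0 => x1 _.
by rewrite mulr_ge0 ?powR_ge0 ?dP1.1.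
Qed.

Lemma ident : GG (prodChannel W1 W2) a (prodDist P1 P2) Q12 = \sum_y1 Am y1 * Dm y1.
Proof.
have gx12 : forall x1 x2, gx (prodChannel W1 W2) a (x1, x2) Q12 =
    \sum_y1 W1 x1 y1 `^ (1 - a) * (qm y1 `^ a * gx W2 a x2 (cond y1)).
  move=> x1 x2; rewrite /gx sum_pair; apply: eq_bigr => y1 _.
  rewrite -key mulr_sumr; apply: eq_bigr => y2 _.
  by rewrite /prodChannel /= powRM // mulrCA.
rewrite /GG sum_pair.
under eq_bigr => x1 _ do under eq_bigr => x2 _ do rewrite gx12 mulr_sumr.
under eq_bigr => x1 _ do rewrite exchange_big.
rewrite exchange_big; apply: eq_bigr => y1 _.
rewrite /Am /Dm /GG -mulrA big_distrlr /= mulr_sumr; apply: eq_bigr => x1 _.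
rewrite mulr_sumr; apply: eq_bigr => x2 _.
rewrite /prodDist /=; ring.
Qed.

Lemma ident1 : GG W1 a P1 qm = \sum_y1 Am y1.
Proof.
rewrite /GG /gx.
under eq_bigr => x1 _ do rewrite mulr_sumr.
rewrite exchange_big; apply: eq_bigr => y1 _.
rewrite /Am mulr_sumr; apply: eq_bigr => x1 _; ring.
Qed.

Lemma Am0 y1 : ~ 0 < qm y1 -> Am y1 = 0.
Proof.
move=> qn; have q0 : qm y1 = 0.
  by apply/eqP; rewrite eq_le qm_ge0 andbT leNgt; apply/negP.
by rewrite /Am q0 powR0 ?gt_eqF // mul0r.
Qed.

Lemma Dm_ge0 y1 : 0 <= Dm y1.
Proof.
apply: GG_ge0; exact: dP2.1.
Qed.

Lemma lower : a != 1 ->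
  exists Q1 Q2, isDist Q1 /\ isDist Q2 /\
   (FF W1 a P1 Q1 + FF W2 a P2 Q2 <= FF (prodChannel W1 W2) a (prodDist P1 P2) Q12)%E.
Proof.
move=> a1.
have an0 : a != 0 by rewrite gt_eqF.
have W12n : forall x y, 0 <= prodChannel W1 W2 x y.
  by move=> x y; rewrite /prodChannel mulr_ge0.
have dP12 := dist_prod dP1 dP2.
have [y0 qy0] := dist_ex dqm.
have [alt1|agt1] := ltP a 1.
- set ys := [arg max_(y > y0 | 0 < qm y) Dm y]%O.
  have [qys Dmax] : 0 < qm ys /\ forall y, 0 < qm y -> Dm y <= Dm ys.
    by rewrite /ys; case: (@arg_maxP _ _ _ y0 (fun y => 0 < qm y) Dm qy0) => i Pi Hi; split => // y /Hi.
  exists qm, (cond ys); split; first exact: dqm.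
  split; first exact: dcond.
  have dc := dcond qys.
  have Gle : GG (prodChannel W1 W2) a (prodDist P1 P2) Q12 <=
      GG W1 a P1 qm * GG W2 a P2 (cond ys).
    rewrite ident ident1 mulr_suml; apply: ler_sum => y1 _.
    have [qp|qn] := boolp.pselect (0 < qm y1).
      by apply: ler_wpM2l; [exact: Am_ge0 | exact: Dmax].
    by rewrite Am0 // !mul0r.
  rewrite (FF_eq an0 W12n dP12.1 dQ.1) (FF_eq an0 W1n dP1.1 dqm.1).
  rewrite (FF_eq an0 W2n dP2.1 dc.1) ltNge (ltW alt1) /=.
  have [G12z|G0] := eqVneq (GG (prodChannel W1 W2) a (prodDist P1 P2) Q12) 0.
    exact: leey.
  rewrite /=.
  have Gp : 0 < GG (prodChannel W1 W2) a (prodDist P1 P2) Q12.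
    by rewrite lt0r G0 /=; apply: GG_ge0; exact: dP12.1.
  have G1p : 0 < GG W1 a P1 qm.
    rewrite lt0r GG_ge0 ?andbT; last exact: dP1.1.
    by apply/eqP => h; move: (lt_le_trans Gp Gle); rewrite h mul0r ltxx.
  have G2p : 0 < GG W2 a P2 (cond ys).
    rewrite lt0r GG_ge0 ?andbT; last exact: dP2.1.
    by apply/eqP => h; move: (lt_le_trans Gp Gle); rewrite h mulr0 ltxx.
  rewrite (gt_eqF G1p) (gt_eqF G2p) -EFinD lee_fin -mulrDr -lnM ?posrE //.
  by apply: (cln_le _ Gp Gle).1; rewrite invr_le0 subr_le0 ltW.
- have agt1' : 1 < a by rewrite lt_neqAle eq_sym a1 agt1.
  set ys := [arg min_(y < y0 | 0 < qm y) Dm y]%O.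
  have [qys Dmin] : 0 < qm ys /\ forall y, 0 < qm y -> Dm ys <= Dm y.
    by rewrite /ys; case: (@arg_minP _ _ _ y0 (fun y => 0 < qm y) Dm qy0) => i Pi Hi; split => // y /Hi.
  exists qm, (cond ys); split; first exact: dqm.
  split; first exact: dcond.
  have dc := dcond qys.
  have Gge : GG W1 a P1 qm * GG W2 a P2 (cond ys) <=
      GG (prodChannel W1 W2) a (prodDist P1 P2) Q12.
    rewrite ident ident1 mulr_suml; apply: ler_sum => y1 _.
    have [qp|qn] := boolp.pselect (0 < qm y1).
      by apply: ler_wpM2l; [exact: Am_ge0 | exact: Dmin].
    by rewrite Am0 // !mul0r.
  rewrite (FF_eq an0 W12n dP12.1 dQ.1) (FF_eq an0 W1n dP1.1 dqm.1).
  rewrite (FF_eq an0 W2n dP2.1 dc.1) agt1' /=.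
  have [vv|nv] := boolP (viol (prodChannel W1 W2) (prodDist P1 P2) Q12).
    by rewrite /=; exact: leey.
  rewrite /=.
  have [x1p P1p] := dist_ex dP1.
  have [x2p P2p] := dist_ex dP2.
  have nv1 : ~~ viol W1 P1 qm.
    apply/negP => /existsP [x1 /existsP [y1 /andP [/andP [Px Qy] /eqP Wxy]]].
    have [y2 Qy2] : exists y2, 0 < Q12 (y1, y2).
      by apply: sum_pos_ex => // y2; exact: dQ.1.
    move/negP: nv; apply; apply/existsP; exists (x1, x2p); apply/existsP; exists (y1, y2).
    by rewrite /prodDist /prodChannel /= mulr_gt0 // Qy2 Wxy mul0r eqxx.
  have nv2 : ~~ viol W2 P2 (cond ys).
    apply/negP => /existsP [x2 /existsP [y2 /andP [/andP [Px Qy] /eqP Wxy]]].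
    have Qy2 : 0 < Q12 (ys, y2).
      by move: Qy; rewrite /cond pmulr_lgt0 // invr_gt0.
    move/negP: nv; apply; apply/existsP; exists (x1p, x2); apply/existsP; exists (ys, y2).
    by rewrite /prodDist /prodChannel /= mulr_gt0 // Qy2 Wxy mulr0 eqxx.
  rewrite (negbTE nv1) (negbTE nv2).
  have G1p := GG_pos a W1n dP1 dqm nv1.
  have G2p := GG_pos a W2n dP2 dc nv2.
  have G12p : 0 < GG W1 a P1 qm * GG W2 a P2 (cond ys) by rewrite mulr_gt0.
  have Gp := lt_le_trans G12p Gge.
  rewrite (gt_eqF G1p) (gt_eqF G2p) (gt_eqF Gp) -EFinD lee_fin -mulrDr -lnM ?posrE //.
  by apply: (cln_le _ G12p Gge).2; rewrite invr_ge0 subr_ge0 ltW.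
Qed.
End Lower.

Lemma sup_add_le (R : realType) (x : \bar R) (S : set \bar R) (z : \bar R) :
  (forall s, S s -> (x + s <= z)%E) -> (x + ereal_sup S <= z)%E.
Proof.
case: x => [r| |] H.
- rewrite -leeBrDl //; apply/ereal_supP => s Ss; rewrite leeBrDl //; exact: H.
- have [->|Sn] := eqVneq (ereal_sup S) -oo%E; first exact: leNye.
  have [s [Ss sn]] : exists s, S s /\ s != -oo%E.
    apply: boolp.contrapT => nex; move/eqP: Sn; apply; apply/ereal_sup_ninfty.
    move=> s Ss; apply/eqP; apply: boolp.contrapT => sn; apply: nex; exists s; split => //.
    exact/negP.
  have := H s Ss; rewrite addye // leye_eq => /eqP ->; exact: leey.
- exact: leNye.
Qed.

Lemma delta_dist (R : realType) (X : finType) (x0 : X) :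
  isDist (fun x : X => ((x == x0)%:R : R)).
Proof.
split; first by move=> x; rewrite ler0n.
rewrite (bigD1 x0) //= eqxx big1 ?addr0 // => x /negbTE ->; by [].
Qed.

Lemma U_lb (R : realType) (X Y : finType) (W : X -> Y -> R) (a : R) :
  0 < a -> a != 1 -> isChannel W -> (0 < #|X|)%N ->
  exists L : R, (L%:E <= U_alpha a W)%E.
Proof.
move=> a0 a1 Wch X0.
have [L HL] := FF_lb a0 a1 Wch.
have [x0 _] := card_gt0P X0.
exists L; apply: (@U_ge R X Y W a _ L%:E (delta_dist R x0)) => Q dQ.
exact: HL (delta_dist R x0) dQ.
Qed.

Unset Implicit Arguments.
Theorem mainTheorem13 (R : realType) (X1 Y1 X2 Y2 : finType) (a : R)
  (W1 : X1 -> Y1 -> R) (W2 : X2 -> Y2 -> R) :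
  0 < a -> a != 1 ->
  (0 < #|X1|)%N -> (0 < #|X2|)%N ->
  isChannel W1 -> isChannel W2 ->
  U_alpha a (prodChannel W1 W2) = (U_alpha a W1 + U_alpha a W2)%E.
Proof.
move=> a0 a1 X10 X20 Wch1 Wch2.
have W1n : forall x y, 0 <= W1 x y by move=> x y; exact: (Wch1 x).1.
have W2n : forall x y, 0 <= W2 x y by move=> x y; exact: (Wch2 x).1.
apply/eqP; rewrite eq_le; apply/andP; split; last first.
- (* U1 + U2 <= U12 *)
  apply: sup_add_le => _ [P2 dP2 <-].
  rewrite addeC; apply: sup_add_le => _ [P1 dP1 <-].
  apply: (@le_trans _ _ (ereal_inf [set FF (prodChannel W1 W2) a (prodDist P1 P2) Q
                                    | Q in @isDist R (Y1 * Y2)%type])); last first.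
    by apply: ereal_sup_ubound; exists (prodDist P1 P2) => //; exact: dist_prod.
  apply/ereal_infP => _ [Q12 dQ12 <-].
  have [Q1 [Q2 [dQ1 [dQ2 H]]]] := lower W1n W2n a0 dP1 dP2 dQ12 a1.
  apply: le_trans H; rewrite addeC; apply: leeD.
  + by apply: ereal_inf_lbound; exists Q1.
  + by apply: ereal_inf_lbound; exists Q2.
- (* U12 <= U1 + U2 *)
  have [L1 HL1] := U_lb a0 a1 Wch1 X10.
  have [L2 HL2] := U_lb a0 a1 Wch2 X20.
  have U1n : U_alpha a W1 != -oo%E by apply: contraTneq HL1 => ->; rewrite leeNy_eq.
  have U2n : U_alpha a W2 != -oo%E by apply: contraTneq HL2 => ->; rewrite leeNy_eq.
  move: U1n U2n.
  case E1: (U_alpha a W1) => [u1| |] // _; case E2: (U_alpha a W2) => [u2| |] // _;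
    rewrite ?addye ?addey //; try exact: leey.
  apply/lee_addgt0Pr => e e0.
  set w1 := u1 + e / 2; set w2 := u2 + e / 2.
  have Uw1 : (U_alpha a W1 < w1%:E)%E by rewrite E1 lte_fin /w1; lra.
  have Uw2 : (U_alpha a W2 < w2%:E)%E by rewrite E2 lte_fin /w2; lra.
  have -> : ((u1 + u2)%:E + e%:E = (w1 + w2)%:E)%E.
    by rewrite -EFinD /w1 /w2; congr (_%:E); field.
  have [Q1 [Q2 [dQ1 [dQ2 HF]]]] : exists Q1 Q2, isDist Q1 /\ isDist Q2 /\
      forall P, isDist P -> (FF (prodChannel W1 W2) a P (prodDist Q1 Q2) <= (w1 + w2)%:E)%E.
    have [alt1|agt1] := ltP a 1.
      have [Q1 [dQ1 H1]] := minimax_lt1 a0 alt1 Wch1 X10 Uw1.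
      have [Q2 [dQ2 H2]] := minimax_lt1 a0 alt1 Wch2 X20 Uw2.
      exists Q1, Q2; split => //; split => // P dP.
      by move: (upper_lt1 W1n W2n a0 alt1 dQ1 dQ2 dP H1 H2).
    have agt1' : 1 < a by rewrite lt_neqAle eq_sym a1 agt1.
    have [Q1 [dQ1 H1]] := minimax_gt1 agt1' Wch1 X10 Uw1.
    have [Q2 [dQ2 H2]] := minimax_gt1 agt1' Wch2 X20 Uw2.
    exists Q1, Q2; split => //; split => // P dP.
    by move: (upper_gt1 W1n W2n agt1' dQ1 dQ2 dP H1 H2).
  apply/ereal_supP => _ [P dP <-].
  apply: le_trans (HF P dP).
  by apply: ereal_inf_lbound; exists (prodDist Q1 Q2) => //; exact: dist_prod.
Qed.
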